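(* Let $\gamma\in(\tfrac12,1)$ and $\kappa>0$. There exists a constant $c>0$ (depending only on $\gamma$ and $\kappa$) such that for every $\ell\in(0,1)$, every $t_0\in(0,1)$, every $n\ge2$ and every $s\in(0,1)$, \[ \nu^{t_0}_{\ell,n}(s)\le \alpha_n s^{-\gamma}+\mathbf 1\{s\ge\ell\}\,\beta_n s^{\gamma-1}, \] where the sequences $(\alpha_n),(\beta_n)$ are defined by $\alpha_1=\kappa t_0^{\gamma-1}$, $\beta_1=\kappa t_0^{-\gamma}$ and \[ \alpha_{n+1}=c\big(\alpha_n\log(1/\ell)+\beta_n\big),\qquad \beta_{n+1}=c\big(\alpha_n\ell^{1-2\gamma}+\beta_n\log(1/\ell)\big). \]
   Context: For $\ell\in(0,1)$, $t_0\in(0,1)$, $\kappa>0$ and $n\in\mathbb N$, define for $s\in(0,1)$ \[ \nu^{t_0}_{\ell,n}(s):=\int_\ell^1\mathrm dt_1\cdots\int_\ell^1\mathrm dt_{n-1}\;\kappa\,(t_{n-1}\wedge s)^{-\gamma}(t_{n-1}\vee s)^{\gamma-1}\prod_{k=1}^{n-1}\kappa\,(t_{k-1}\wedge t_k)^{-\gamma}(t_{k-1}\vee t_k)^{\gamma-1} \] (for $n=1$ there are no integrals and the product is empty, so $\nu^{t_0}_{\ell,1}(s)=\kappa(t_0\wedge s)^{-\gamma}(t_0\vee s)^{\gamma-1}$). Equivalently $\nu^{t_0}_{\ell,n}(s)=\int_\ell^1\mathrm du\,\nu^{t_0}_{\ell,n-1}(u)\,\kappa(u\wedge s)^{-\gamma}(u\vee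 s)^{\gamma-1}$ for $n\ge2$. *)

(* Defs.v *)
From HB Require Import structures.
From mathcomp Require Import all_boot all_order all_algebra.
From mathcomp Require Import all_classical all_reals all_analysis.
Set Implicit Arguments. Unset Strict Implicit. Unset Printing Implicit Defensive.
Import Order.TTheory GRing.Theory Num.Theory.
Import numFieldNormedType.Exports.
Local Open Scope classical_set_scope.
Local Open Scope ring_scope.

Definition kern {R : realType} (gamma kappa a b : R) : R :=
  kappa * (Num.min a b) `^ (- gamma) * (Num.max a b) `^ (gamma - 1).

(* nu_ell^{t0} indexed by n.+1 : nuaux k = nu_{k+1}; values in \bar R
   (nonnegative integrands, Lebesgue integral over [ell,1]). *)
Fixpoint nuaux {R : realType} (gamma kappa ell t0 : R) (k : nat) (s : R) : \bar R :=
  match k with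
  | O => (kern gamma kappa t0 s)%:E
  | k'.+1 => (\int[@lebesgue_measure R]_(u in `[ell, 1%R]) 
               (nuaux gamma kappa ell t0 k' u * (kern gamma kappa u s)%:E))%E
  end.

Definition nu {R : realType} (gamma kappa ell t0 : R) (n : nat) (s : R) : \bar R :=
  nuaux gamma kappa ell t0 n.-1 s.

(* (alpha_{k+1}, beta_{k+1}) *)
Fixpoint abaux {R : realType} (gamma kappa c ell t0 : R) (k : nat) : R * R :=
  match k with
  | O => (kappa * t0 `^ (gamma - 1), kappa * t0 `^ (- gamma))
  | k'.+1 => let ab := abaux gamma kappa c ell t0 k' in
      (c * (ab.1 * ln (ell^-1) + ab.2),
       c * (ab.1 * ell `^ (1 - 2 * gamma) + ab.2 * ln (ell^-1)))
  end.

Definition alpha {R : realType} (gamma kappa c ell t0 : R) (n : nat) : R :=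
  (abaux gamma kappa c ell t0 n.-1).1.
Definition beta {R : realType} (gamma kappa c ell t0 : R) (n : nat) : R :=
  (abaux gamma kappa c ell t0 n.-1).2.

(* Main.v *)
Require Import Defs.
From HB Require Import structures.
From mathcomp Require Import all_boot all_order all_algebra.
From mathcomp Require Import all_classical all_reals all_analysis.
From mathcomp Require Import ring lra.
Import Order.TTheory GRing.Theory Num.Theory.
Import numFieldNormedType.Exports.
Local Open Scope classical_set_scope.
Local Open Scope ring_scope.

Section S.
Variable R : realType.
Local Notation mu := (@lebesgue_measure R).

Lemma le_integral_nm (D : set R) (f g : R -> \bar R) :
  (forall x, D x -> (0 <= f x)%E) -> (forall x, D x -> (f x <= g x)%E) ->
  (\int[mu]_(x in D) f x <= \int[mu]_(x in D) g x)%E.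
Proof.
move=> f0 fg.
have g0 : forall x, D x -> (0 <= g x)%E by move=> x Dx; exact: le_trans (f0 x Dx) (fg x Dx).
rewrite !ge0_integralE //.
apply: ereal_sup_le => _ [h hf <-]; exists h => // x.
apply: le_trans (hf x) _.
rewrite /patch; case: ifP => // /set_mem Dx; exact: fg.
Qed.

Lemma ftc_pos (f F : R -> R) (a b : R) : 0 < a -> a < b ->
  (forall x : R, 0 < x -> is_derive x 1 F (f x)) ->
  (forall x : R, 0 < x -> {for x, continuous f}) ->
  (\int[mu]_(x in `[a, b]) (f x)%:E = (F b - F a)%:E)%E.
Proof.
move=> a0 ab dF cf.
have cF : forall x, 0 < x -> {for x, continuous F}.
  move=> x x0; apply: differentiable_continuous; apply/derivable1_diffP.
  by have := dF x x0 => -[].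
rewrite EFinB; apply: continuous_FTC2 => //.
- apply: continuous_in_subspaceT => x; rewrite inE /= in_itv /= => /andP[ax _].
  by apply: cf; exact: lt_le_trans ax.
- split.
  + move=> x; rewrite in_itv /= => /andP[ax _].
    by have := dF x (lt_trans a0 ax) => -[].
  + exact/cvg_at_right_filter/cF.
  + exact/cvg_at_left_filter/cF/(lt_trans a0 ab).
- move=> x; rewrite in_itv /= => /andP[ax _].
  have := dF x (lt_trans a0 ax) => H.
  by rewrite derive1E derive_val.
Qed.

Lemma cpow (p x : R) : 0 < x -> {for x, continuous (@powR R ^~ p)}.
Proof.
move=> x0; apply: differentiable_continuous; apply/derivable1_diffP.
by apply: derivable_powR; rewrite in_itv /= andbT.
Qed.

Lemma int_G (g A B C l : R) : 0 < l -> l < 1 -> 2^-1 < g -> g < 1 ->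
 (\int[mu]_(x in `[l, 1%R]) (A * x `^ (-1) + B * x `^ (2*g-2) + C * x `^ (- (2*g)))%:E =
  (A * ln (l^-1) + B * (1 - l `^ (2*g-1)) / (2*g-1) + C * (l `^ (1-2*g) - 1) / (2*g-1))%:E)%E.
Proof.
move=> l0 l1 g1 g2.
have hg : 0 < 2 * g - 1 by lra.
pose F := (A \*: (@ln R)) + ((B / (2*g-1)) \*: (@powR R ^~ (2*g-1))) + ((C / (1-2*g)) \*: (@powR R ^~ (1-2*g))).
set f := (fun x => A * x `^ (-1) + B * x `^ (2*g-2) + C * x `^ (- (2*g))).
have dF : forall x : R, 0 < x -> is_derive x 1 F (f x).
{ move=> x x0; rewrite /F /f.
  apply: is_derive_eq.
    apply: is_deriveD; first apply: is_deriveD.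
    - apply: is_deriveZ; exact: is_derive1_ln.
    - apply: is_deriveZ; exact: is_derive1_powR.
    - apply: is_deriveZ; exact: is_derive1_powR.
  rewrite powR_inv1 ?ltW //.
  have -> : 2 * g - 1 - 1 = 2 * g - 2 by ring.
  have -> : 1 - 2 * g - 1 = - (2 * g) by ring.
  have h3 : 2*g-1 != 0 by rewrite gt_eqF.
  have h4 : 1-2*g != 0 by rewrite lt_eqF //; lra.
  rewrite /GRing.scale /=; field; by rewrite h3 h4 gt_eqF. }
have cf : forall x : R, 0 < x -> {for x, continuous f}.
{ move=> x x0.
  have -> : f = (A \*: (@powR R ^~ (-1))) + (B \*: (@powR R ^~ (2*g-2))) + (C \*: (@powR R ^~ (- (2*g)))) by apply/funext.
  by apply: continuousD; first apply: continuousD; apply: continuousZl_tmp; apply: cpow. }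
rewrite (@ftc_pos f F l 1 l0 l1 dF cf).
have FE : forall x, F x = A * ln x + B / (2*g-1) * x `^ (2*g-1) + C / (1-2*g) * x `^ (1-2*g) by [].
congr EFin; rewrite !FE ln1 !powR1 lnV ?posrE //.
have h2 : 1 - 2 * g = - (2 * g - 1) by ring.
have h3 : 2*g-1 != 0 by rewrite gt_eqF.
rewrite h2; field; exact: h3.
Qed.


Lemma minl' (x y : R) : x <= y -> Num.min x y = x.
Proof. by move=> h; rewrite /Num.min; case: ltP => // h2; apply/eqP; rewrite eq_le h2 h. Qed.
Lemma minr' (x y : R) : y < x -> Num.min x y = y.
Proof. by move=> h; rewrite /Num.min ltNge (ltW h). Qed.
Lemma maxr' (x y : R) : x <= y -> Num.max x y = y.
Proof. by move=> h; rewrite /Num.max; case: ltP => // h2; apply/eqP; rewrite eq_le h2 h. Qed.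
Lemma maxl' (x y : R) : y < x -> Num.max x y = x.
Proof. by move=> h; rewrite /Num.max ltNge (ltW h). Qed.

Lemma kern_ge0 (g k a b : R) : 0 <= k -> 0 <= kern g k a b.
Proof. by move=> k0; rewrite /kern; apply: mulr_ge0; [apply: mulr_ge0|]; rewrite ?powR_ge0. Qed.

Lemma nu_ge0 (g k l t0 : R) n s : 0 <= k -> (0 <= nuaux g k l t0 n s)%E.
Proof.
move=> k0; elim: n s => [|n IH] s /=; first by rewrite lee_fin kern_ge0.
apply: integral_ge0 => u _; apply: mule_ge0 => //; rewrite lee_fin kern_ge0 //.
Qed.

Lemma powRDp (u a b : R) : 0 < u -> u `^ a * u `^ b = u `^ (a + b).
Proof. by move=> u0; rewrite powRD //; apply/implyP => _; rewrite gt_eqF. Qed.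

Lemma kern_bound (g k l s u al be I : R) : 2^-1 < g -> g < 1 -> 0 <= k ->
  0 < l -> l <= u -> 0 < s -> 0 <= al -> 0 <= be ->
  I = (if l <= s then 1 else 0) ->
  (al * u `^ (- g) + be * u `^ (g - 1)) * kern g k u s <=
  (k * s `^ (- g) * al + I * (k * s `^ (g - 1) * be)) * u `^ (-1)
  + (k * s `^ (- g) * be) * u `^ (2 * g - 2)
  + (I * (k * s `^ (g - 1) * al)) * u `^ (- (2 * g)).
Proof.
move=> g1 g2 k0 l0 lu s0 a0 b0 hI.
have u0 : 0 < u by exact: lt_le_trans lu.
have I0 : 0 <= I by rewrite hI; case: ifP.
have e1 : u `^ (- g) * u `^ (- g) = u `^ (- (2 * g)) by rewrite powRDp //; congr powR; ring.
have e2 : u `^ (g - 1) * u `^ (- g) = u `^ (-1) by rewrite powRDp //; congr powR; ring.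
have e3 : u `^ (- g) * u `^ (g - 1) = u `^ (-1) by rewrite powRDp //; congr powR; ring.
have e4 : u `^ (g - 1) * u `^ (g - 1) = u `^ (2 * g - 2) by rewrite powRDp //; congr powR; ring.
have p0 := @powR_ge0 R.
rewrite /kern.
case: (leP u s) => us.
- have I1 : I = 1 by rewrite hI ifT //; exact: le_trans us.
    have -> : (al * u `^ (- g) + be * u `^ (g - 1)) * (k * u `^ (- g) * s `^ (g - 1))
     = k * s `^ (g - 1) * (al * (u `^ (- g) * u `^ (- g)) + be * (u `^ (g - 1) * u `^ (- g))) by ring.
  rewrite e1 e2 I1 -subr_ge0.
  set X := _ - _.
  have -> : X = k * s `^ (- g) * al * u `^ (-1) + k * s `^ (- g) * be * u `^ (2 * g - 2) by rewrite /X; ring.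
  by rewrite addr_ge0 // !mulr_ge0.
  have -> : (al * u `^ (- g) + be * u `^ (g - 1)) * (k * s `^ (- g) * u `^ (g - 1))
     = k * s `^ (- g) * (al * (u `^ (- g) * u `^ (g - 1)) + be * (u `^ (g - 1) * u `^ (g - 1))) by ring.
  rewrite e3 e4 -subr_ge0.
  set X := _ - _.
  have -> : X = I * (k * s `^ (g - 1) * be) * u `^ (-1) + I * (k * s `^ (g - 1) * al) * u `^ (- (2 * g)) by rewrite /X; ring.
  by rewrite addr_ge0 // !mulr_ge0.
Qed.

Lemma L_ge0 (l : R) : 0 < l -> l <= 1 -> 0 <= ln (l^-1).
Proof. by move=> l0 l1; apply: ln_ge0; rewrite invf_ge1. Qed.

Lemma ab_ge0 (g k c l t0 : R) n : 0 <= k -> 0 <= c -> 0 < l -> l <= 1 ->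
  0 <= (abaux g k c l t0 n).1 /\ 0 <= (abaux g k c l t0 n).2.
Proof.
move=> k0 c0 l0 l1; elim: n => [|n [IH1 IH2]] /=.
  by split; apply: mulr_ge0; rewrite ?powR_ge0.
have L0 := @L_ge0 l l0 l1.
by split; apply: mulr_ge0 => //; apply: addr_ge0; rewrite ?mulr_ge0 ?powR_ge0.
Qed.

Lemma step (g k c l t0 s : R) n : 2^-1 < g -> g < 1 -> 0 < k -> c = k / (2 * g - 1) ->
  0 < l -> l < 1 -> 0 < s -> s <= 1 ->
  (forall u, l <= u -> u <= 1 -> (nuaux g k l t0 n u <=
     ((abaux g k c l t0 n).1 * u `^ (- g) + (abaux g k c l t0 n).2 * u `^ (g - 1))%:E)%E) ->
  (nuaux g k l t0 n.+1 s <= ((abaux g k c l t0 n.+1).1 * s `^ (- g) +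
     (if l <= s then (abaux g k c l t0 n.+1).2 * s `^ (g - 1) else 0))%:E)%E.
Proof.
move=> g1 g2 k0 hc l0 l1 s0 s1 IH.
have hg : 0 < 2 * g - 1 by lra.
have c0 : 0 <= c by rewrite hc divr_ge0 // ltW.
have [a0 b0] := @ab_ge0 g k c l t0 n (ltW k0) c0 l0 (ltW l1).
set al := (abaux g k c l t0 n).1.
set be := (abaux g k c l t0 n).2.
set L := ln (l^-1).
have L0 : 0 <= L := @L_ge0 l l0 (ltW l1).
have -> : abaux g k c l t0 n.+1 = (c * (al * L + be), c * (al * l `^ (1 - 2 * g) + be * L)) by [].
set I := (if l <= s then 1 else 0) : R.
have I0 : 0 <= I by rewrite /I; case: ifP.
have -> : (if l <= s then c * (al * l `^ (1 - 2 * g) + be * L) * s `^ (g - 1) else 0)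
   = I * (c * (al * l `^ (1 - 2 * g) + be * L) * s `^ (g - 1)) by rewrite /I; case: ifP => _; ring.
rewrite [nuaux _ _ _ _ _.+1 _]/=.
apply: le_trans.
  apply: (@le_integral_nm _ _ (fun u => ((k * s `^ (- g) * al + I * (k * s `^ (g - 1) * be)) * u `^ (-1)
  + (k * s `^ (- g) * be) * u `^ (2 * g - 2)
  + (I * (k * s `^ (g - 1) * al)) * u `^ (- (2 * g)))%:E)).
  - by move=> u _; apply: mule_ge0; rewrite ?nu_ge0 ?lee_fin ?kern_ge0 // ltW.
  - move=> u; rewrite /= in_itv /= => /andP[lu u1].
    apply: le_trans.
      apply: lee_wpmul2r; first by rewrite lee_fin kern_ge0 // ltW.
      exact: IH.
    by rewrite -EFinM lee_fin; apply: (@kern_bound g k l s u) => //; exact: ltW.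
rewrite int_G // lee_fin -subr_ge0.
set Y := _ - _.
have -> : Y = (c - k) * (s `^ (- g) * al + I * s `^ (g - 1) * be) * L
   + k * s `^ (- g) * be * l `^ (2 * g - 1) / (2 * g - 1)
   + I * k * s `^ (g - 1) * al / (2 * g - 1).
  rewrite /Y hc /= -/L; field; by rewrite gt_eqF.
have ck : 0 <= c - k.
  have -> : c - k = k * (2 - 2 * g) / (2 * g - 1) by rewrite hc; field; rewrite gt_eqF.
  have h22 : 0 <= 2 - 2 * g by lra.
  by rewrite divr_ge0 ?mulr_ge0 ?(ltW hg) ?(ltW k0).
by rewrite !addr_ge0 // ?divr_ge0 ?(ltW hg) // !mulr_ge0 ?powR_ge0 // ?addr_ge0 // ?mulr_ge0 ?powR_ge0 // ltW.
Qed.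

Lemma allP (g k c l t0 : R) n : 2^-1 < g -> g < 1 -> 0 < k -> c = k / (2 * g - 1) ->
  0 < l -> l < 1 -> 0 < t0 ->
  forall u, l <= u -> u <= 1 -> (nuaux g k l t0 n u <=
     ((abaux g k c l t0 n).1 * u `^ (- g) + (abaux g k c l t0 n).2 * u `^ (g - 1))%:E)%E.
Proof.
move=> g1 g2 k0 hc l0 l1 t00.
elim: n => [|n IH] u lu u1.
  rewrite /= lee_fin /kern.
  case: (leP t0 u) => tu.
    by rewrite lerDr !mulr_ge0 ?powR_ge0 // ltW.
  by rewrite [k * u `^ (- g) * _]mulrAC lerDl !mulr_ge0 ?powR_ge0 // ltW.
have u0 : 0 < u by exact: lt_le_trans lu.
have := @step g k c l t0 u n g1 g2 k0 hc l0 l1 u0 u1 IH.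
by rewrite lu.
Qed.
End S.

Theorem lemma2p9 (R : realType) (gamma kappa : R) :
  2^-1 < gamma -> gamma < 1 -> 0 < kappa ->
  exists c : R, 0 < c /\
    forall (ell t0 : R) (n : nat) (s : R),
      0 < ell -> ell < 1 -> 0 < t0 -> t0 < 1 -> (2 <= n)%N -> 0 < s -> s < 1 ->
      (nu gamma kappa ell t0 n s <=
        (alpha gamma kappa c ell t0 n * s `^ (- gamma)
         + (if ell <= s then beta gamma kappa c ell t0 n * s `^ (gamma - 1) else 0))%:E)%E.
Proof.
move=> g1 g2 k0.
have hg : 0 < 2 * gamma - 1 by lra.
exists (kappa / (2 * gamma - 1)); split; first by rewrite divr_gt0.
move=> ell t0 [|[|k]] s l0 l1 t00 t1 // _ s0 s1.
rewrite /nu /alpha /beta /=.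
apply: (@step R gamma kappa _ ell t0 s k) => //; first exact: ltW.
exact: allP.
Qed.
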